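(* Assume (A1), (A2), (A3) (see context). If $\mathbb P$ has finite range of dependence or has negative association, then there is a constant $c>0$ such that $\mathbb P(\xi(\Lambda_\ell)=0)\le e^{-c\ell^d}$ for all $\ell\ge1$. In particular $\mathbb P$ satisfies Condition $C(\alpha)$ for every $\alpha>0$.
   Context: $\Lambda_\ell=[-\ell,\ell]^d$. $\mathcal N$ = locally finite subsets of $\mathbb R^d$, identified with counting measures ($\xi(A)=\#(\xi\cap A)$), with $\sigma$-algebra generated by $\xi\mapsto\xi(A)$; $\tau_x\xi:=\xi-x$. $\mathrm{DT}(\xi)$: graph on $\xi$ with edges $\{x,y\}$ whose Voronoi cells $\mathrm{Vor}(\cdot|\xi)=\{y:|y-\cdot|\le|y-z|\,\forall z\in\xi\}$ share a $(d-1)$-dimensional face. Setting: $(\Omega,\mathcal F,\mathcal P)$ probability space with measurable $\mathbb R^d$-action $(\theta_x)$; simple point process $\omega\mapsto\hat\omega\in\mathcal N$ with law $\mathbb P$; measurable symmetric conductances $c_{x,y}(\omega)\ge0$ vanishing off the edges of $\mathrm{DT}(\hat\omega)$. (A1) $\mathcal P$ is $\theta$-invariant and $\mathcal P(\hat\omega=\emptyset)=0$; (A2) $m:=\mathbb E[\xi([0,1]^d)]\in(0,\infty)$; (A3) on a $\theta$-invariant measurable full-measure set, $\widehat{\theta_x\omega}=\tau_x\hat\omega$ and $c_{y-x,z-x}(\theta_x\omega)=c_{y,z}(\omega)$ for all $x$ and edges $\{y,z\}$. Finite range of dependence: $\exists L>0$ such that $\xi\cap A$, $\xi\cap B$ are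 independent under $\mathbb P$ for Borel $A,B$ at Euclidean distance $\ge L$. Negative association: for all $n,k$, weakly increasing $f:\mathbb R_+^n\to\mathbb R$, $g:\mathbb R_+^k\to\mathbb R$, pairwise disjoint bounded Borel $A_1,\dots,A_n,B_1,\dots,B_k$: $\mathrm{Cov}_{\mathbb P}(f(\xi(A_1),\dots,\xi(A_n)),g(\xi(B_1),\dots,\xi(B_k)))\le0$ whenever both have finite second moments. Condition $C(\alpha)$: $\exists\kappa>0$ with $\mathbb P(\xi(\Lambda_\ell)=0)\le\kappa\ell^{-\alpha}$ for all $\ell\ge1$. *)

(* Defs.v *)
From HB Require Import structures.
From mathcomp Require Import all_boot all_order all_algebra.
From mathcomp Require Import all_classical all_reals all_analysis measurable_realfun.
Set Implicit Arguments. Unset Strict Implicit. Unset Printing Implicit Defensive.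
Import Order.TTheory GRing.Theory Num.Theory.
Import numFieldNormedType.Exports.
Local Open Scope classical_set_scope.
Local Open Scope ring_scope.

(* Euclidean norm on R^d (the library norm on matrices is the sup norm). *)
Definition enorm (R : realType) (d : nat) (x : 'rV[R]_d) : R :=
  Num.sqrt (\sum_(i < d) x ord0 i ^+ 2).

Definition borel (R : realType) (d : nat) : set (set 'rV[R]_d) :=
  <<s [set A : set 'rV[R]_d | @open 'rV[R]_d A] >>.

Definition bounded_set (R : realType) (d : nat) (A : set 'rV[R]_d) : Prop :=
  exists r : R, A `<=` [set x | enorm x <= r].

Definition cube (R : realType) (d : nat) (l : R) : set 'rV[R]_d :=
  [set x | forall i : 'I_d, - l <= x ord0 i <= l].

Definition unit_cube (R : realType) (d : nat) : set 'rV[R]_d :=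
  [set x | forall i : 'I_d, 0 <= x ord0 i <= 1].

Definition locally_finite (R : realType) (d : nat) (xi : set 'rV[R]_d) : Prop :=
  forall r : R, finite_set (xi `&` [set x | enorm x <= r]).

Definition npts (R : realType) (d : nat) (xi A : set 'rV[R]_d) : \bar R :=
  \esum_(x in xi `&` A) 1%E.

Definition shift (R : realType) (d : nat) (xi : set 'rV[R]_d) (x : 'rV[R]_d)
  : set 'rV[R]_d := [set y - x | y in xi].

Definition voronoi (R : realType) (d : nat) (xi : set 'rV[R]_d) (x : 'rV[R]_d)
  : set 'rV[R]_d :=
  [set y | forall z, xi z -> enorm (y - x) <= enorm (y - z)].

(* {x,y} is an edge of DT(xi): the Voronoi cells of x and y share a
   (d-1)-dimensional face, i.e. their intersection (which lies in the bisector
   hyperplane) contains a relatively open ball of that hyperplane. *)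
Definition dt_edge (R : realType) (d : nat) (xi : set 'rV[R]_d) (x y : 'rV[R]_d)
  : Prop :=
  [/\ xi x, xi y, x <> y &
   exists (p : 'rV[R]_d) (r : R), 0 < r /\
     forall q, enorm (q - p) < r -> enorm (q - x) = enorm (q - y) ->
       voronoi xi x q /\ voronoi xi y q].

Definition dist_ge (R : realType) (d : nat) (A B : set 'rV[R]_d) (L : R) : Prop :=
  forall a b, A a -> B b -> L <= enorm (a - b).

Definition measurable_action (R : realType) (d : nat) (dO : measure_display)
  (Omega : measurableType dO) (theta : 'rV[R]_d -> Omega -> Omega) : Prop :=
  [/\ forall w, theta 0 w = w,
      forall x y w, theta (x + y) w = theta x (theta y w) &
      forall E : set Omega, measurable E ->
        <<s [set C | exists A B, [/\ borel A, measurable B & C = A `*` B]] >>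
          [set p : 'rV[R]_d * Omega | E (theta p.1 p.2)] ].

Definition point_process (R : realType) (d : nat) (dO : measure_display)
  (Omega : measurableType dO) (hat : Omega -> set 'rV[R]_d) : Prop :=
  (forall w, locally_finite (hat w)) /\
  (forall A, borel A -> measurable_fun [set: Omega] (fun w => (npts (hat w) A : \bar R))).

Definition conductances (R : realType) (d : nat) (dO : measure_display)
  (Omega : measurableType dO) (hat : Omega -> set 'rV[R]_d)
  (c : Omega -> 'rV[R]_d -> 'rV[R]_d -> R) : Prop :=
  [/\ forall x y, measurable_fun setT (fun w => c w x y),
      forall w x y, c w x y = c w y x,
      forall w x y, 0 <= c w x y &
      forall w x y, ~ dt_edge (hat w) x y -> c w x y = 0].

Definition A1 (R : realType) (d : nat) (dO : measure_display)
  (Omega : measurableType dO) (P : probability Omega R)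
  (theta : 'rV[R]_d -> Omega -> Omega) (hat : Omega -> set 'rV[R]_d) : Prop :=
  (forall x (E : set Omega), measurable E -> P (theta x @^-1` E) = P E) /\
  P [set w | hat w = set0] = 0%E.

Definition A2 (R : realType) (d : nat) (dO : measure_display)
  (Omega : measurableType dO) (P : probability Omega R)
  (hat : Omega -> set 'rV[R]_d) : Prop :=
  (0 < \int[P]_w npts (hat w) (@unit_cube R d) < +oo)%E.

Definition A3 (R : realType) (d : nat) (dO : measure_display)
  (Omega : measurableType dO) (P : probability Omega R)
  (theta : 'rV[R]_d -> Omega -> Omega) (hat : Omega -> set 'rV[R]_d)
  (c : Omega -> 'rV[R]_d -> 'rV[R]_d -> R) : Prop :=
  exists Omega0 : set Omega,
    [/\ measurable Omega0, P Omega0 = 1%E,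
        forall x, theta x @^-1` Omega0 = Omega0 &
        forall w, Omega0 w -> forall x,
          hat (theta x w) = shift (hat w) x /\
          forall y z, dt_edge (hat w) y z ->
            c (theta x w) (y - x) (z - x) = c w y z].

(* sigma-algebra on Omega generated by xi \cap A, i.e. by the counts xi(A'),
   A' Borel subset of A *)
Definition restr_sigma (R : realType) (d : nat) (dO : measure_display)
  (Omega : measurableType dO) (hat : Omega -> set 'rV[R]_d) (A : set 'rV[R]_d)
  : set (set Omega) :=
  <<s [set E | exists (A' : set 'rV[R]_d) (k : \bar R),
                 [/\ borel A', A' `<=` A & E = [set w | npts (hat w) A' = k]]] >>.

Definition finite_range (R : realType) (d : nat) (dO : measure_display)
  (Omega : measurableType dO) (P : probability Omega R)
  (hat : Omega -> set 'rV[R]_d) : Prop :=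
  exists L : R, 0 < L /\
    forall A B : set 'rV[R]_d, borel A -> borel B -> dist_ge A B L ->
      forall E F, restr_sigma hat A E -> restr_sigma hat B F ->
        P (E `&` F) = (P E * P F)%E.

Definition incr_on_nonneg (R : realType) (n : nat) (f : 'rV[R]_n -> R) : Prop :=
  forall u v : 'rV[R]_n, (forall i, 0 <= u ord0 i <= v ord0 i) -> f u <= f v.

Definition neg_assoc (R : realType) (d : nat) (dO : measure_display)
  (Omega : measurableType dO) (P : probability Omega R)
  (hat : Omega -> set 'rV[R]_d) : Prop :=
  forall (n k : nat) (f : 'rV[R]_n -> R) (g : 'rV[R]_k -> R)
         (As : 'I_n -> set 'rV[R]_d) (Bs : 'I_k -> set 'rV[R]_d),
    incr_on_nonneg f -> incr_on_nonneg g ->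
    (forall i, borel (As i) /\ bounded_set (As i)) ->
    (forall j, borel (Bs j) /\ bounded_set (Bs j)) ->
    (forall i i', i <> i' -> As i `&` As i' = set0) ->
    (forall j j', j <> j' -> Bs j `&` Bs j' = set0) ->
    (forall i j, As i `&` Bs j = set0) ->
    let X := fun w => f (\row_(i < n) fine (npts (hat w) (As i))) in
    let Y := fun w => g (\row_(j < k) fine (npts (hat w) (Bs j))) in
    X \in Lfun P 2%:E -> Y \in Lfun P 2%:E ->
    (covariance P X Y <= 0)%E.

(* Main.v *)
Require Import Defs.
From HB Require Import structures.
From mathcomp Require Import all_boot all_order all_algebra.
From mathcomp Require Import all_classical all_reals all_analysis measurable_realfun.
From mathcomp Require Import lra.
Import Order.TTheory GRing.Theory Num.Theory.
Import numFieldNormedType.Exports.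
Local Open Scope classical_set_scope.
Local Open Scope ring_scope.
Set Implicit Arguments. Unset Strict Implicit. Unset Printing Implicit Defensive.
Section Geo.
Variables (R : realType) (d : nat).
Implicit Types (A B xi : set 'rV[R]_d).

Lemma npts_eq0 xi A : npts xi A = 0%E <-> xi `&` A = set0.
Proof.
split.
- move=> h; apply/seteqP; split=> // x hx; exfalso.
  have : (1 <= npts xi A)%E.
    apply: esum_ge; exists [set x]; first by split; [exact: finite_set1| move=> y ->].
    by rewrite fsbig_set1.
  by rewrite h lee_fin ler10.
- by move=> h; rewrite /npts h esum_set0.
Qed.

Lemma npts_fin xi A : finite_set (xi `&` A) -> npts xi A \is a fin_num.
Proof.
move=> fA; rewrite /npts esum_fset // fsbig_finite //=.
by rewrite sumEFin.
Qed.

Definition box (a : 'rV[R]_d) (s : R) : set 'rV[R]_d :=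
  [set x | forall i, a ord0 i <= x ord0 i <= a ord0 i + s].

Lemma closed_box a s : closed (box a s).
Proof.
have -> : box a s = \bigcap_(i in setT) ((fun x : 'rV[R]_d => x ord0 i) @^-1`
   ([set y : R | a ord0 i <= y] `&` [set y | y <= a ord0 i + s])).
  by apply/seteqP; split=> x /= h i; [move=> _; apply/andP; exact: h | have /andP := h i I].
apply: closed_bigI => i _; apply: preimage_closed.
  by move=> x _; exact: coord_continuous.
by apply: closedI; [exact: closed_ge | exact: closed_le].
Qed.

Lemma borel_closed A : closed A -> borel A.
Proof.
move=> cA; rewrite -[A]setCK; apply: sigma_algebraC.
by apply: sub_sigma_algebra; rewrite /= openC.
Qed.

Lemma borelU A B : borel A -> borel B -> borel (A `|` B).
Proof. exact: (@measurableU _ (g_sigma_algebraType [set A : set 'rV[R]_d | open A])). Qed.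

End Geo.
Section Geo2.
Variables (R : realType) (d : nat).
Implicit Types (A B xi : set 'rV[R]_d).

Lemma enorm_coord (x : 'rV[R]_d) i : `|x ord0 i| <= enorm x.
Proof.
rewrite /enorm -sqrtr_sqr ler_wsqrtr // (bigD1 i) //= lerDl.
by apply: sumr_ge0 => j _; rewrite sqr_ge0.
Qed.

Lemma bounded_box (a : 'rV[R]_d) (s : R) : 0 <= s -> Defs.bounded_set (box a s).
Proof.
move=> s0; exists (Num.sqrt (\sum_i (a ord0 i ^+ 2 + (a ord0 i + s) ^+ 2))) => x /= hx.
rewrite /enorm ler_wsqrtr // ler_sum // => i _.
have /andP[h1 h2] := hx i; have := sqr_ge0 (a ord0 i); have := sqr_ge0 (a ord0 i + s); case: (lerP 0 (x ord0 i)) => hx0; nra.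
Qed.

Lemma boundedU A B : Defs.bounded_set A -> Defs.bounded_set B -> Defs.bounded_set (A `|` B).
Proof.
move=> [r hr] [r' hr']; exists (Num.max r r') => x [/hr|/hr'] /= h.
  by rewrite le_max h.
by rewrite le_max h orbT.
Qed.

Lemma cube_box (l : R) : @cube R d l = box (const_mx (- l)) (l *+ 2).
Proof.
apply/seteqP; split=> x /= h i; have := h i; rewrite ?mxE => /andP[h1 h2];
  apply/andP; split; lra.
Qed.

Lemma unit_cube_box : @unit_cube R d = box (0 : 'rV[R]_d) 1.
Proof.
apply/seteqP; split=> x /= h i; have := h i; rewrite ?mxE => /andP[h1 h2];
  apply/andP; split; lra.
Qed.

End Geo2.

Section Prob.
Variables (R : realType) (d : nat) (dO : measure_display) (Omega : measurableType dO)
  (P : probability Omega R) (hat : Omega -> set 'rV[R]_d).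
Hypothesis hpp : point_process hat.

Definition Z (A : set 'rV[R]_d) : set Omega := [set w | npts (hat w) A = 0%E].

Lemma mZ A : borel A -> measurable (Z A).
Proof.
move=> bA; have := (hpp.2 A bA) measurableT [set 0%E] (emeasurable_set1 _).
by rewrite setTI.
Qed.

Lemma ZU A B : Z (A `|` B) = Z A `&` Z B.
Proof.
apply/seteqP; split=> w; rewrite /Z /= !npts_eq0.
  move=> h; split; apply/seteqP; split=> // x [hx ax]; rewrite -h; split=> //; by [left|right].
move=> [h1 h2]; apply/seteqP; split=> // x [hx [ax|ax]].
  by rewrite -h1. by rewrite -h2.
Qed.

Lemma Zsub A B : A `<=` B -> Z B `<=` Z A.
Proof.
move=> AB w; rewrite /Z /= !npts_eq0 => h; apply/seteqP; split=> // x [hx ax].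
by rewrite -h; split=> //; apply: AB.
Qed.

Lemma sep_FR : finite_range P hat -> exists D : R, 0 < D /\
  forall A B, borel A -> borel B -> dist_ge A B D ->
  P (Z (A `|` B)) = (P (Z A) * P (Z B))%E.
Proof.
move=> [L [L0 hL]]; exists L; split=> // A B bA bB dAB.
rewrite ZU; apply: (hL A B bA bB dAB); apply: sub_sigma_algebra.
  by exists A, 0%E; split.
by exists B, 0%E; split.
Qed.

End Prob.

Section NA.
Variables (R : realType) (d : nat) (dO : measure_display) (Omega : measurableType dO)
  (P : probability Omega R) (hat : Omega -> set 'rV[R]_d).
Hypothesis hpp : point_process hat.

Lemma npts_finb w A : Defs.bounded_set A -> npts (hat w) A \is a fin_num.
Proof.
move=> [r hr]; apply: npts_fin; apply: (sub_finite_set _ (hpp.1 w r)).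
by move=> x [hx ax]; split=> //; apply: hr.
Qed.

Lemma indic_Lfun2 (E : set Omega) : measurable E -> (\1_E : Omega -> R) \in Lfun P 2%:E.
Proof.
move=> mE; rewrite inE/=; apply/andP; split; rewrite inE//=.
rewrite /finite_norm unlock poweR_lty//.
have -> : (\int[P]_x `|(EFin \o \1_E) x| `^ 2 = \int[P]_x (\1_E x)%:E)%E.
  apply: eq_integral => x _ /=; rewrite indicE; case: (x \in E) => /=.
    by rewrite normr1 powR1.
  by rewrite normr0 powR0.
by rewrite integral_indic // setIT (le_lt_trans (probability_le1 _ _)) ?ltry.
Qed.

Lemma sep_NA : neg_assoc P hat -> forall A B, borel A -> Defs.bounded_set A ->
  borel B -> Defs.bounded_set B -> A `&` B = set0 ->
  (P (Z hat (A `|` B)) <= P (Z hat A) * P (Z hat B))%E.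
Proof.
move=> hNA A B bA hA bB hB AB.
pose f : 'rV[R]_1 -> R := fun u => if u ord0 ord0 == 0 then -1 else 0.
have finc : incr_on_nonneg f.
  move=> u v h; have /andP[h1 h2] := h ord0; rewrite /f.
  have [v0|v0] := eqVneq (v ord0 ord0) 0.
    have u0 : u ord0 ord0 = 0 by lra.
    by rewrite u0 eqxx.
  by case: ifP => _; lra.
have := hNA 1%N 1%N f f (fun _ => A) (fun _ => B) finc finc.
have -> : (fun w => f (\row_(i < 1) fine (npts (hat w) ((fun _ => A) i)))) =
   \- \1_(Z hat A).
  apply/funext => w; rewrite /f mxE /= indicE.
  have [hw|hw] := pselect (Z hat A w).
    by rewrite mem_set //; move: hw; rewrite /Z /= => ->; rewrite eqxx.
  rewrite memNset //; move: (npts_finb w hA) hw; rewrite /Z /=.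
  case: (npts (hat w) A) => //= r _ hr; rewrite ifF ?oppr0 //.
  by apply/eqP => r0; apply: hr; rewrite r0.
have -> : (fun w => f (\row_(i < 1) fine (npts (hat w) ((fun _ => B) i)))) =
   \- \1_(Z hat B).
  apply/funext => w; rewrite /f mxE /= indicE.
  have [hw|hw] := pselect (Z hat B w).
    by rewrite mem_set //; move: hw; rewrite /Z /= => ->; rewrite eqxx.
  rewrite memNset //; move: (npts_finb w hB) hw; rewrite /Z /=.
  case: (npts (hat w) B) => //= r _ hr; rewrite ifF ?oppr0 //.
  by apply/eqP => r0; apply: hr; rewrite r0.
have mA := mZ hpp bA; have mB := mZ hpp bB.
have l2A := indic_Lfun2 mA; have l2B := indic_Lfun2 mB.
have l1A := Lfun_subset12 (fin_num_measure _ _ measurableT) l2A.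
have l1B := Lfun_subset12 (fin_num_measure _ _ measurableT) l2B.
have l1AB := Lfun2_mul_Lfun1 l2A l2B.
have ne1 : forall i i' : 'I_1, i <> i' -> False.
  by move=> i i' ne; apply: ne; rewrite (ord1 i) (ord1 i').
move=> /(_ (fun=> conj bA hA) (fun=> conj bB hB)).
move=> /(_ (fun i i' ne => False_ind _ (ne1 i i' ne))).
move=> /(_ (fun i i' ne => False_ind _ (ne1 i i' ne))).
move=> /(_ (fun _ _ => AB)) /=.
have nA : \- \1_(Z hat A) \in Lfun P 2%:E by rewrite (rpredN (Lfun P 2%:E) (\1_(Z hat A))).
have nB : \- \1_(Z hat B) \in Lfun P 2%:E by rewrite (rpredN (Lfun P 2%:E) (\1_(Z hat B))).
move=> /(_ nA nB).
rewrite covarianceNN // covarianceE //.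
have -> : ((\1_(Z hat A) * \1_(Z hat B))%R : Omega -> R) = \1_(Z hat A `&` Z hat B).
  by apply/funext => w; rewrite indicI.
rewrite !expectation_indic //; last exact: measurableI.
by rewrite (ZU hat) sube_le0.
Qed.
End NA.

Lemma enorm0 (R : realType) (d : nat) : enorm (0 : 'rV[R]_d) = 0.
Proof.
rewrite /enorm big1 ?sqrtr0 // => i _; by rewrite mxE expr0n.
Qed.

Section Grid.
Variables (R : realType) (d : nat) (dO : measure_display) (Omega : measurableType dO)
  (P : probability Omega R) (hat : Omega -> set 'rV[R]_d).
Hypothesis hpp : point_process hat.
Variable D : R.
Hypothesis D0 : 0 < D.
Hypothesis Hsep : forall A B, borel A -> Defs.bounded_set A -> borel B -> Defs.bounded_set B ->
  dist_ge A B D -> (P (Z hat (A `|` B)) <= P (Z hat A) * P (Z hat B))%E.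
Variable p : R.
Hypothesis p0 : 0 <= p.
Hypothesis Hp : forall v, (P (Z hat (box v 1)) <= p%:E)%E.
Variables (l : R) (m : nat).

Let M := D + 1.
Let T := {ffun 'I_d -> 'I_m}.
Definition corner (k : T) : 'rV[R]_d := \row_i (- l + (k i)%:R * M).
Definition cell (k : T) := box (corner k) 1.
Definition cells (s : seq T) := \big[setU/set0]_(k <- s) cell k.

Lemma cells_mem s x : cells s x -> exists2 k, k \in s & cell k x.
Proof.
elim: s => [|k s ih]; first by rewrite /cells big_nil.
rewrite /cells big_cons => -[h|h]; first by exists k => //; rewrite mem_head.
by have [k' k's hk'] := ih h; exists k' => //; rewrite in_cons k's orbT.
Qed.

Lemma borel_cells s : borel (cells s).
Proof.
elim: s => [|k s ih]; rewrite /cells ?big_nil ?big_cons.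
  by apply: borel_closed; exact: closed0.
by apply: borelU => //; apply: borel_closed; exact: closed_box.
Qed.

Lemma bounded_cells s : Defs.bounded_set (cells s).
Proof.
elim: s => [|k s ih]; rewrite /cells ?big_nil ?big_cons.
  by exists 0 => x.
by apply: boundedU => //; apply: bounded_box.
Qed.

Lemma cells_dist k k' : k != k' -> dist_ge (cell k) (cell k') D.
Proof.
move=> kk a b ha hb.
have [i ki] : exists i, k i != k' i.
  apply/existsP; apply: contraR kk => /existsPn h; apply/eqP/ffunP => i.
  by apply/eqP; have := h i; rewrite negbK.
apply: le_trans (enorm_coord _ i); rewrite !mxE.
have := ha i; have := hb i; rewrite /corner !mxE => /andP[b1 b2] /andP[a1 a2].
have M1 : 1 <= M by rewrite /M; have := D0; lra.
case: (ltngtP (k i) (k' i)) => hlt.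
- have : ((k i)%:R + 1 <= (k' i)%:R :> R) by rewrite natr1 ler_nat.
  move=> /(ler_wpM2r (ltW (lt_le_trans ltr01 M1))) h.
  rewrite ler0_norm; first by rewrite /M in h M1 a1 a2 b1 b2 *; lra.
  rewrite /M in h M1 a1 a2 b1 b2 *; lra.
- have : ((k' i)%:R + 1 <= (k i)%:R :> R) by rewrite natr1 ler_nat.
  move=> /(ler_wpM2r (ltW (lt_le_trans ltr01 M1))) h.
  rewrite ger0_norm; first by rewrite /M in h M1 a1 a2 b1 b2 *; lra.
  rewrite /M in h M1 a1 a2 b1 b2 *; lra.
- by move: ki; rewrite -val_eqE /= hlt eqxx.
Qed.

Lemma grid_ind s : uniq s -> (P (Z hat (cells s)) <= (p ^+ size s)%:E)%E.
Proof.
elim: s => [|k s ih] /=.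
  by move=> _; rewrite expr0 probability_le1 //; apply: mZ => //; exact: borel_cells.
move=> /andP[ks us]; rewrite /cells big_cons -/(cells s).
have dd : dist_ge (cell k) (cells s) D.
  move=> a b ha /cells_mem [k' k's hb]; apply: (cells_dist _ ha hb).
  by apply: contraNneq ks => ->.
have h := Hsep (borel_closed (@closed_box _ _ (corner k) 1)) (@bounded_box _ _ (corner k) 1 ler01)
  (borel_cells s) (bounded_cells s) dd.
apply: (le_trans h).
rewrite exprS EFinM; apply: lee_pmul => //; exact: ih.
Qed.

End Grid.

Lemma borel_cube (R : realType) (d : nat) (l : R) : borel (@cube R d l).
Proof. by rewrite cube_box; apply: borel_closed; exact: closed_box. Qed.

Section Grid2.
Variables (R : realType) (d : nat) (dO : measure_display) (Omega : measurableType dO)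
  (P : probability Omega R) (hat : Omega -> set 'rV[R]_d).
Hypothesis hpp : point_process hat.
Variable D : R.
Hypothesis D0 : 0 < D.
Hypothesis Hsep : forall A B, borel A -> Defs.bounded_set A -> borel B -> Defs.bounded_set B ->
  dist_ge A B D -> (P (Z hat (A `|` B)) <= P (Z hat A) * P (Z hat B))%E.
Variable p : R.
Hypothesis p0 : 0 <= p.
Hypothesis Hp : forall v, (P (Z hat (box v 1)) <= p%:E)%E.

Lemma grid_cube (l : R) (m : nat) : m%:R * (D + 1) <= l *+ 2 ->
  (P (Z hat (@cube R d l)) <= (p ^+ (m ^ d))%:E)%E.
Proof.
move=> hm.
have sub : cells D l (enum {ffun 'I_d -> 'I_m}) `<=` cube l.
  move=> x /cells_mem [k _ hk] i; have := hk i; rewrite /corner mxE => /andP[h1 h2].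
  have hk1 : ((k i)%:R + 1 <= m%:R :> R) by rewrite natr1 ler_nat ltn_ord.
  have hk0 : (0 <= (k i)%:R :> R) by rewrite ler0n.
  have := ler_wpM2r (ltW (lt_le_trans ltr01 (_ : 1 <= D + 1))) hk1.
  move=> /(_ ltac:(have := D0; lra)) h3.
  have h4 : 0 <= (k i)%:R * (D + 1) by apply: mulr_ge0 => //; have := D0; lra.
  apply/andP; split; [lra|].
  have := D0; rewrite mulr2n in hm; lra.
have -> : (m ^ d)%N = size (enum {ffun 'I_d -> 'I_m}) by rewrite -cardE card_ffun !card_ord.
apply: (le_trans _ (grid_ind hpp D0 Hsep Hp l (enum_uniq _))).
apply: le_measure.
- by rewrite inE; apply: (mZ hpp); apply: borel_cube.
- by rewrite inE; apply: (mZ hpp); apply: borel_cells.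
- exact: Zsub.
Qed.

End Grid2.

Lemma empty_transfer (T1 T2 : Type) (A : set T1) (B : set T2) :
  (forall x, A x -> exists y, B y) -> B = set0 -> A = set0.
Proof.
move=> h B0; apply/seteqP; split=> // x /h [y By].
by have : (set0 : set T2) y by rewrite -B0.
Qed.

Lemma shift_empty (R : realType) (d : nat) (xi : set 'rV[R]_d) v :
  (Defs.shift xi v `&` (@unit_cube R d) = set0) <-> (xi `&` box v 1 = set0).
Proof.
split; apply: empty_transfer.
- move=> x [xx bx]; exists (x - v); split; first by exists x.
  move=> i; have := bx i; rewrite !mxE => /andP[h1 h2]; apply/andP; split; lra.
- move=> _ [[y yx <-] uy]; exists y; split => // i.
  have := uy i; rewrite !mxE => /andP[h1 h2]; apply/andP; split; lra.
Qed.

Section Stat.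
Variables (R : realType) (d : nat) (dO : measure_display) (Omega : measurableType dO)
  (P : probability Omega R) (theta : 'rV[R]_d -> Omega -> Omega)
  (hat : Omega -> set 'rV[R]_d) (c : Omega -> 'rV[R]_d -> 'rV[R]_d -> R).
Hypothesis hpp : point_process hat.
Hypothesis hA1 : A1 P theta hat.
Hypothesis hA2 : A2 P hat.
Hypothesis hA3 : A3 P theta hat c.

Lemma full_meas (Om A : set Omega) : measurable Om -> P Om = 1%E -> measurable A ->
  P (A `&` Om) = P A.
Proof.
move=> mO PO mA; rewrite [RHS](measureDI P mA mO) -[LHS]add0e; congr (_ + _).
apply/esym/eqP; rewrite eq_le measure_ge0 andbT.
apply: (@le_trans _ _ (P (~` Om))).
  by apply: le_measure; rewrite ?inE; [apply: measurableD|apply: measurableC|move=> x []].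
by rewrite probability_setC // PO subee.
Qed.

Lemma stat v : P (Z hat (box v 1)) = P (Z hat (@unit_cube R d)).
Proof.
have [Om [mO PO inv hO]] := hA3.
have mU : measurable (Z hat (@unit_cube R d)) by apply: (mZ hpp); rewrite unit_cube_box; apply: borel_closed; exact: closed_box.
have mB : measurable (Z hat (box v 1)) by apply: (mZ hpp); apply: borel_closed; exact: closed_box.
rewrite -(full_meas mO PO mB) -(full_meas mO PO mU).
rewrite -(hA1.1 v _ (measurableI _ _ mU mO)).
congr (P _); apply/seteqP; split=> w /=.
- move=> [hw Ow]; have Ow' : Om (theta v w) by rewrite -(inv v) in Ow.
  split=> //; rewrite /Z /= npts_eq0 (hO w Ow v).1 shift_empty.
  by move: hw; rewrite /Z /= npts_eq0.
- move=> [hw Ow']; have Ow : Om w by rewrite -(inv v).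
  split=> //; rewrite /Z /= npts_eq0 -shift_empty -(hO w Ow v).1.
  by move: hw; rewrite /Z /= npts_eq0.
Qed.

Lemma p_lt1 : (P (Z hat (@unit_cube R d)) < 1)%E.
Proof.
have mU : measurable (Z hat (@unit_cube R d)) by apply: (mZ hpp); rewrite unit_cube_box; apply: borel_closed; exact: closed_box.
rewrite lt_neqAle probability_le1 // andbT; apply/negP => /eqP h1.
have bU : borel (@unit_cube R d) by rewrite unit_cube_box; apply: borel_closed; exact: closed_box.
have := hA2; rewrite /A2.
have -> : (\int[P]_w npts (hat w) (@unit_cube R d) = \int[P]_w (cst 0%E) w)%E.
  apply: ae_eq_integral => //; first exact: (hpp.2 _ bU).
  exists (~` Z hat (@unit_cube R d)); split.
  - exact: measurableC.
  - by move: (probability_setC P mU); rewrite h1 subee...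
  - by move=> w /= hw Zw; apply: hw => _.
by rewrite integral0 ltxx.
Qed.

End Stat.

Lemma exp_poly (R : realType) (d : nat) (c0 alpha : R) : (0 < d)%N -> 0 < c0 -> 0 < alpha ->
  exists kappa : R, 0 < kappa /\ forall l : R, 1 <= l ->
    expR (- c0 * l ^+ d) <= kappa * l `^ (- alpha).
Proof.
move=> d0 c00 a0.
set N := (Num.trunc alpha).+1.
have aN : alpha <= N%:R.
  by have /andP[_ h] := trunc_itv (ltW a0); apply: ltW.
exists (N`!%:R / c0 ^+ N); split.
  by apply: divr_gt0; [rewrite ltr0n fact_gt0 | exact: exprn_gt0].
move=> l l1.
have l0 : 0 < l by apply: lt_le_trans l1.
have hld : l <= l ^+ d.
  case: d d0 => // d' _; rewrite exprS -{1}(mulr1 l) ler_wpM2l ?(ltW l0) //.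
  exact: exprn_ege1.
apply: (@le_trans _ _ (expR (- (c0 * l)))).
  rewrite ler_expR mulNr lerN2; apply: ler_wpM2l => //; exact: ltW.
have hx : 0 <= c0 * l by apply: mulr_ge0; apply: ltW.
have h2 := expR_ge1Dxn (Num.trunc alpha) hx.
have hpos : 0 < (c0 * l) ^+ N / N`!%:R.
  by apply: divr_gt0; [apply: exprn_gt0; apply: mulr_gt0 | rewrite ltr0n fact_gt0].
have h3 : (c0 * l) ^+ N / N`!%:R <= expR (c0 * l).
  apply: le_trans h2; rewrite lerDr //.
rewrite expRN.
apply: (@le_trans _ _ (((c0 * l) ^+ N / N`!%:R)^-1)).
  by rewrite lef_pV2 ?posrE ?expR_gt0.
have hlp : l `^ alpha <= l ^+ N.
  by rewrite -powR_mulrn ?(ltW l0) //; apply: ler_powR.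
have hlp0 : 0 < l `^ alpha by rewrite powR_gt0.
rewrite powRN.
apply: (@le_trans _ _ (N`!%:R / c0 ^+ N * (l ^+ N)^-1)).
  rewrite invf_div exprMn invfM mulrA; apply: le_refl.
rewrite ler_wpM2l //.
  by apply: divr_ge0; [rewrite ler0n | apply: exprn_ge0; apply: ltW].
by rewrite lef_pV2 ?posrE // exprn_gt0.
Qed.

Unset Implicit Arguments.
Set Strict Implicit.

Theorem proposition4p6 (R : realType) (d : nat) (hd : (0 < d)%N)
  (dO : measure_display) (Omega : measurableType dO) (P : probability Omega R)
  (theta : 'rV[R]_d -> Omega -> Omega) (hat : Omega -> set 'rV[R]_d)
  (c : Omega -> 'rV[R]_d -> 'rV[R]_d -> R) :
  measurable_action theta ->
  point_process hat ->
  conductances hat c ->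
  A1 P theta hat -> A2 P hat -> A3 P theta hat c ->
  finite_range P hat \/ neg_assoc P hat ->
  (exists c0 : R, 0 < c0 /\
     forall l : R, 1 <= l ->
       (P [set w | npts (hat w) (@cube R d l) = 0%E] <= (expR (- c0 * l ^+ d))%:E)%E)
  /\
  (forall alpha : R, 0 < alpha -> exists kappa : R, 0 < kappa /\
     forall l : R, 1 <= l ->
       (P [set w | npts (hat w) (@cube R d l) = 0%E] <= (kappa * l `^ (- alpha))%:E)%E).
Proof.
move=> hact hpp hcond hA1 hA2 hA3 hdep.
have [D [D0 Hsep]] : exists D : R, 0 < D /\
  forall A B, borel A -> Defs.bounded_set A -> borel B -> Defs.bounded_set B ->
  dist_ge A B D -> (P (Z hat (A `|` B)) <= P (Z hat A) * P (Z hat B))%E.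
  case: hdep => [hFR|hNA].
    have [D [D0 h]] := sep_FR hFR.
    by exists D; split => // A B bA _ bB _ dAB; rewrite (h A B bA bB dAB).
  exists 1; split => // A B bA hA bB hB dAB; apply: (sep_NA hpp hNA) => //.
  apply/seteqP; split => // x [xa xb]; have := dAB x x xa xb.
  by rewrite subrr enorm0 ler10.
have bU : borel (@unit_cube R d).
  by rewrite unit_cube_box; apply: borel_closed; exact: closed_box.
have mU : measurable (Z hat (@unit_cube R d)) by exact: (mZ hpp).
set p0 := fine (P (Z hat (@unit_cube R d))).
have pUE : P (Z hat (@unit_cube R d)) = p0%:E.
  by rewrite /p0 fineK // fin_num_measure.
have p0lt1 : p0 < 1 by have := p_lt1 hpp hA2; rewrite pUE lte_fin.
have p0ge0 : 0 <= p0 by rewrite /p0 fine_ge0.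
set q := Num.max p0 (2^-1).
have q0 : 0 < q by rewrite lt_max invr_gt0 ltr0n orbT.
have q1 : q < 1 by rewrite gt_max p0lt1 invf_lt1 ?ltr0n // ltr1n.
have Hp : forall v, (P (Z hat (box v 1)) <= q%:E)%E.
  by move=> v; rewrite (stat hpp hA1 hA3) pUE lee_fin le_max lexx.
set a := - ln q.
have a0 : 0 < a by rewrite /a oppr_gt0 ln_lt0 // q0 q1.
have qE : q = expR (- a) by rewrite /a opprK lnK // posrE.
set M := D + 1.
have M1 : 1 <= M by rewrite /M; lra.
have M0 : 0 < M by lra.
have Md0 : 0 < M ^+ d by apply: exprn_gt0.
set c0 := a / M ^+ d.
have c00 : 0 < c0 by apply: divr_gt0.
have main : forall l : R, 1 <= l ->
    (P [set w | npts (hat w) (@cube R d l) = 0%E] <= (expR (- c0 * l ^+ d))%:E)%E.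
  move=> l l1.
  have l0 : 0 < l by lra.
  have hU : (P (Z hat (@cube R d l)) <= P (Z hat (@unit_cube R d)))%E.
    apply: le_measure; rewrite ?inE.
    - by apply: (mZ hpp); apply: borel_cube.
    - exact: mU.
    - apply: Zsub => x hx i; have /andP[h1 h2] := hx i; apply/andP; split; lra.
  have [lM|Ml] := ltP l M.
    apply: (le_trans hU); rewrite pUE lee_fin.
    apply: (@le_trans _ _ q); first by rewrite le_max lexx.
    rewrite qE ler_expR mulNr lerN2 /c0 mulrAC ler_pdivrMr // ler_wpM2l ?(ltW a0) //.
    by apply: lerXn2r; rewrite ?nnegrE ?(ltW l0) ?(ltW M0) // ltW.
  set m := Num.trunc (l *+ 2 / M).
  have hx : 0 <= l *+ 2 / M by apply: divr_ge0; [rewrite mulrn_wge0 // ltW | exact: ltW].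
  have /andP[t1 t2] := trunc_itv hx.
  have hm : m%:R * (D + 1) <= l *+ 2 by rewrite -ler_pdivlMr.
  apply: (le_trans (grid_cube hpp D0 Hsep Hp hm)); rewrite lee_fin.
  have mlM : l / M <= m%:R.
    have : l *+ 2 / M < m%:R + 1 by rewrite natr1.
    have : 1 <= l / M by rewrite ler_pdivlMr // mul1r.
    rewrite mulr2n mulrDl; lra.
  rewrite qE -expRM_natr ler_expR natrX.
  rewrite mulNr mulNr lerN2 /c0 mulrAC -mulrA -expr_div_n ler_wpM2l ?(ltW a0) //.
  apply: lerXn2r => //; rewrite nnegrE //; apply: divr_ge0; exact: ltW.
split; first by exists c0; split.
move=> alpha a0'; have [kappa [k0 hk]] := exp_poly hd c00 a0'.
exists kappa; split => // l l1; apply: (le_trans (main l l1)); rewrite lee_fin; exact: hk.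
Qed.
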